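(* Let $A$ be an associative algebra and $\{ N_\alpha : A \to A \}_{\alpha \in \Omega}$ a Nijenhuis family. Then $(A, \{ \prec_\alpha, \succ_\alpha, \curlyvee_{\alpha, \beta} \}_{\alpha, \beta \in \Omega})$ is an NS-family algebra, where $a \prec_\alpha b := a \cdot N_\alpha (b)$, $a \succ_\alpha b := N_\alpha (a) \cdot b$ and $a \curlyvee_{\alpha, \beta} b := - N_{\alpha \beta} (a \cdot b)$.
   Context: $\Omega$ is a semigroup. A Nijenhuis family is a collection of linear maps $N_\alpha:A\to A$ with $N_\alpha(a) \cdot N_\beta(b) = N_{\alpha \beta} \big( N_\alpha (a) \cdot b + a \cdot N_\beta(b) - N_{\alpha \beta}(a \cdot b) \big)$ for all $a,b,\alpha,\beta$. An NS-family algebra is a vector space $D$ with bilinear maps $\{ \prec_\alpha, \succ_\alpha, \curlyvee_{\alpha, \beta}\}_{\alpha, \beta \in \Omega}$ such that for all $x,y,z$, $\alpha,\beta,\gamma$: (1) $(x \prec_\alpha y) \prec_\beta z = x \prec_{\alpha \beta} ( y \prec_\beta z + y \succ_\alpha z + y \curlyvee_{\alpha, \beta} z)$; (2) $(x \succ_\alpha y) \prec_\beta z = x \succ_\alpha (y \prec_\beta z)$; (3) $(x \prec_\beta y + x \succ_\alpha y + x \curlyvee_{\alpha, \beta} y) \succ_{\alpha \beta} z = x \succ_\alpha (y \succ_\beta z)$; (4) $( x \prec_\beta y + x \succ_\alpha y + x \curlyvee_{\alpha, \beta} y ) \curlyvee_{\alpha \beta, \gamma} z + (x \curlyvee_{\alpha,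 \beta} y) \prec_\gamma z = x \succ_\alpha (y \curlyvee_{\beta, \gamma} z) + x \curlyvee_{\alpha, \beta \gamma} ( y \prec_\gamma z + y \succ_\beta z + y \curlyvee_{\beta, \gamma} z )$. *)

(* Defs.v *)
From mathcomp Require Import all_boot all_order all_algebra.
Set Implicit Arguments. Unset Strict Implicit. Unset Printing Implicit Defensive.
Import GRing.Theory.
Local Open Scope ring_scope.

Definition bilinear_map (K : pzRingType) (V : lmodType K) (f : V -> V -> V) : Prop :=
  (forall (a : K) (x y z : V), f (a *: x + y) z = a *: f x z + f y z) /\
  (forall (a : K) (x y z : V), f x (a *: y + z) = a *: f x y + f x z).

Definition assoc_algebra (K : pzRingType) (A : lmodType K) (mul : A -> A -> A) : Prop :=
  bilinear_map mul /\ (forall x y z, mul (mul x y) z = mul x (mul y z)).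

Definition semigroup_op (Omega : Type) (op : Omega -> Omega -> Omega) : Prop :=
  forall a b c, op (op a b) c = op a (op b c).

Definition nijenhuis_family (K : pzRingType) (A : lmodType K) (mul : A -> A -> A)
    (Omega : Type) (op : Omega -> Omega -> Omega) (N : Omega -> A -> A) : Prop :=
  (forall al, linear (N al)) /\
  (forall (a b : A) (al be : Omega),
     mul (N al a) (N be b) =
     N (op al be) (mul (N al a) b + mul a (N be b) - N (op al be) (mul a b))).

Definition NS_family_algebra (K : pzRingType) (D : lmodType K)
    (Omega : Type) (op : Omega -> Omega -> Omega)
    (prec succ : Omega -> D -> D -> D) (vee : Omega -> Omega -> D -> D -> D) : Prop :=
  (forall al, bilinear_map (prec al)) /\
  (forall al, bilinear_map (succ al)) /\
  (forall al be, bilinear_map (vee al be)) /\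
  (forall (x y z : D) (al be : Omega),
     prec be (prec al x y) z =
     prec (op al be) x (prec be y z + succ al y z + vee al be y z)) /\
  (forall (x y z : D) (al be : Omega),
     prec be (succ al x y) z = succ al x (prec be y z)) /\
  (forall (x y z : D) (al be : Omega),
     succ (op al be) (prec be x y + succ al x y + vee al be x y) z =
     succ al x (succ be y z)) /\
  (forall (x y z : D) (al be ga : Omega),
     vee (op al be) ga (prec be x y + succ al x y + vee al be x y) z
       + prec ga (vee al be x y) z =
     succ al x (vee be ga y z)
       + vee al (op be ga) x (prec ga y z + succ be y z + vee be ga y z)).

(* Main.v *)
Require Import Defs.
From mathcomp Require Import all_boot all_order all_algebra.
Import GRing.Theory.
Local Open Scope ring_scope.
Lemma zm (V : zmodType) (u1 u2 u3 u4 v w : V) :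
  (u1+u2-u3)+(u3+u4-w) = (u2+v-w)+(u4+u1-v).
Proof.
have -> : (u1+u2-u3)+(u3+u4-w) = u1+u2+u4-w by rewrite (addrA (u1+u2-u3)) (addrA (u1+u2-u3)) subrK.
have -> : (u2+v-w)+(u4+u1-v) = u4+u1+u2 - w.
  by rewrite [u2+v]addrC (addrC (v+u2-w)) !addrA subrK.
by rewrite [u4+u1]addrC -[u1+u4+u2]addrA [u4+u2]addrC addrA.
Qed.

Theorem proposition3p17 (K : fieldType) (A : lmodType K) (mul : A -> A -> A)
    (Omega : Type) (op : Omega -> Omega -> Omega) (N : Omega -> A -> A) :
  assoc_algebra mul -> semigroup_op op -> nijenhuis_family mul op N ->
  NS_family_algebra op
    (fun al a b => mul a (N al b))
    (fun al a b => mul (N al a) b)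
    (fun al be a b => - N (op al be) (mul a b)).
Proof.
move=> [[bl br] mA] sg [Nl Nij].
have mDl x y z : mul (x + y) z = mul x z + mul y z.
  by have := bl 1 x y z; rewrite !scale1r.
have mDr x y z : mul z (x + y) = mul z x + mul z y.
  by have := br 1 z x y; rewrite !scale1r.
have m0l z : mul 0 z = 0.
  by have := bl (-1) z z z; rewrite !scaleN1r !addNr.
have m0r z : mul z 0 = 0.
  by have := br (-1) z z z; rewrite !scaleN1r !addNr.
have mNl x z : mul (- x) z = - mul x z.
  by have := bl (-1) x 0 z; rewrite !scaleN1r !addr0 ?m0l ?m0r addr0.
have mNr x z : mul z (- x) = - mul z x.
  by have := br (-1) z x 0; rewrite !scaleN1r !addr0 ?m0l ?m0r addr0.
have NZ al a x y : N al (a *: x + y) = a *: N al x + N al y by apply: Nl.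
have ND al x y : N al (x + y) = N al x + N al y.
  by have := NZ al 1 x y; rewrite !scale1r.
have N0 al : N al 0 = 0.
  by have := NZ al (-1) 0 0; rewrite scaler0 addr0 scaleN1r addNr.
have NN al x : N al (- x) = - N al x.
  by have := NZ al (-1) x 0; rewrite !scaleN1r !addr0 N0 addr0.
have NB al x y : N al (x - y) = N al x - N al y by rewrite ND NN.
have mBl x y z : mul (x - y) z = mul x z - mul y z by rewrite mDl mNl.
have mBr x y z : mul z (x - y) = mul z x - mul z y by rewrite mDr mNr.
split; [|split; [|split; [|split; [|split; [|split]]]]].
- move=> al; split=> a x y z /=; first by rewrite bl.
  by rewrite NZ br.
- move=> al; split=> a x y z /=; first by rewrite NZ bl.
  by rewrite br.
- move=> al be; split=> a x y z /=; first by rewrite bl NZ opprD scalerN.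
  by rewrite br NZ opprD scalerN.
- move=> x y z al be /=.
  by rewrite mA Nij (addrC (mul (N al y) z)).
- by move=> x y z al be /=; rewrite mA.
- move=> x y z al be /=.
  by rewrite -mA Nij (addrC (mul x (N be y))).
- move=> x y z al be ga /=.
  rewrite mNl Nij mNr Nij -sg.
  rewrite !mDl !mDr !mNl !mNr -!NN -!ND.
  congr (N _ _); rewrite !mA !NN -!opprD; congr (- _).
  exact: zm.
Qed.
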